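(* Let $H$ be a group and let $A$ be either the empty set or a normal subgroup of $H$. For $1\leq l\leq m$ let $\mathcal E_{l,m}$ be the subgroup of $H$ generated by all elements $[x_1,\ldots,x_i]^{2^{m-i-k}}$ with $l\leq i\leq m$, $x_1,\ldots,x_i\in H$, $0\leq k\leq m-i$, such that there exist indices $1\leq j_1<\cdots<j_k\leq i$ with $x_{j_1},\ldots,x_{j_k}\in A$ (call these elements generators of $\mathcal E_{l,m}$); when $A=\varnothing$ (so only $k=0$ occurs) write $\widetilde{\mathcal E}_{l,m}$. Let $m\geq1$, $1\leq i\leq m$, $y\in H$, and let $x=[x_1,\ldots,x_i]\in\Gamma_i(H)$ be such that $x^{2^{m-i-k}}$ is a generator of $\mathcal E_{i,m}$ for some $0\leq k\leq m-i$. Then $$[x^{2^{m-i-k}},y]\equiv [x,y]^{2^{m-i-k}}\pmod{\mathcal E_{i+1,m+1}}.$$ In particular, if $x^{2^{m-i}}$ is a generator of $\widetilde{\mathcal E}_{i,m}$, then $[x^{2^{m-i}},y]\equiv[x,y]^{2^{m-i}}\pmod{\widetilde{\mathcal E}_{i+1,m+1}}$.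
   Context: $[a,b]=aba^{-1}b^{-1}$; right-normed iterated commutators $[x_1,\ldots,x_n]=[x_1,[x_2,\ldots,[x_{n-1},x_n]]]$ (with $[x_1]=x_1$); $\Gamma_1(H)=H$, $\Gamma_{i+1}(H)=[\Gamma_i(H),H]$. Each $\mathcal E_{l,m}$ is normal in $H$. Congruence modulo a normal subgroup $N$ means equality of $N$-cosets. *)

(* Defs.v *)
From mathcomp Require Import all_boot.
Unset Strict Implicit. Unset Printing Implicit Defensive.

Unset Implicit Arguments.
Record Grp := {
  carrier :> Type;
  gmul : carrier -> carrier -> carrier;
  gone : carrier;
  ginv : carrier -> carrier;
  gmulA : forall a b c, gmul a (gmul b c) = gmul (gmul a b) c;
  gmul1 : forall a, gmul gone a = a;
  gmulV : forall a, gmul (ginv a) a = gone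
}.

Section Defs.
Context {H : Grp}.

Definition comm (a b : H) : H :=
  gmul H a (gmul H b (gmul H (ginv H a) (ginv H b))).

Fixpoint gpow (a : H) (n : nat) : H :=
  match n with 0 => gone H | n'.+1 => gmul H a (gpow a n') end.

(* right-normed iterated commutator [x1,...,xn] = [x1,[x2,...,[x_{n-1},x_n]]], [x1] = x1 *)
Fixpoint icomm (xs : seq H) : H :=
  match xs with
  | [::] => gone H
  | [:: x] => x
  | x :: xs' => comm x (icomm xs')
  end.

Definition is_subgroup (K : H -> Prop) : Prop :=
  K (gone H) /\ (forall a b, K a -> K b -> K (gmul H a b)) /\ (forall a, K a -> K (ginv H a)).

Definition is_normal (K : H -> Prop) : Prop :=
  is_subgroup K /\ forall a g, K a -> K (gmul H g (gmul H a (ginv H g))).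

Definition gen (S : H -> Prop) (g : H) : Prop :=
  forall K, is_subgroup K -> (forall s, S s -> K s) -> K g.

(* x_1,...,x_i (= xs, i = size xs) has k entries in A at indices 1 <= j_1 < ... < j_k <= i *)
Definition has_k_in (A : H -> Prop) (xs : seq H) (k : nat) : Prop :=
  exists js : seq nat, size js = k /\ sorted ltn js /\
    (forall j, j \in js -> (1 <= j <= size xs)%N /\ A (nth (gone H) xs j.-1)).

Definition E_gen (A : H -> Prop) (l m : nat) (g : H) : Prop :=
  exists (xs : seq H) (k : nat),
    let i := size xs in
    [/\ (l <= i <= m)%N, (k <= m - i)%N, has_k_in A xs k &
        g = gpow (icomm xs) (2 ^ (m - i - k))].

Definition E (A : H -> Prop) (l m : nat) : H -> Prop := gen (E_gen A l m).

Definition Etilde (l m : nat) : H -> Prop := E (fun _ => False) l m.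

Definition congr_mod (N : H -> Prop) (a b : H) : Prop := N (gmul H (ginv H a) b).

End Defs.

(* Main.v *)
Require Import Defs.
From mathcomp Require Import all_boot zify.
Set Implicit Arguments. Unset Strict Implicit.

Section G.
Context {H : Grp}.
Local Notation "a ⋆ b" := (gmul H a b) (at level 40, left associativity).
Local Notation inv := (ginv H).
Local Notation one := (gone H).
Implicit Types (a b c d g h u w z x s : H) (K N S T : H -> Prop).

Lemma mulA' (a b c : H) : (a ⋆ b) ⋆ c = a ⋆ (b ⋆ c).
Proof. by rewrite gmulA. Qed.
Lemma mul1 (a : H) : one ⋆ a = a. Proof. exact: gmul1. Qed.
Lemma mulV (a : H) : inv a ⋆ a = one. Proof. exact: gmulV. Qed.
Lemma mulVK (a b : H) : inv a ⋆ (a ⋆ b) = b.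
Proof. by rewrite gmulA mulV mul1. Qed.
Lemma mulrV (a : H) : a ⋆ inv a = one.
Proof.
have e : inv (inv a) ⋆ (inv a ⋆ (a ⋆ inv a)) = a ⋆ inv a.
  by rewrite mulVK.
by rewrite -e (gmulA _ (inv a) a) mulV mul1 mulV.
Qed.
Lemma mulr1 (a : H) : a ⋆ one = a.
Proof. by rewrite -(mulV a) gmulA mulrV mul1. Qed.
Lemma mulKV (a b : H) : a ⋆ (inv a ⋆ b) = b.
Proof. by rewrite gmulA mulrV mul1. Qed.
Lemma invK (a : H) : inv (inv a) = a.
Proof. by rewrite -[inv (inv a)]mulr1 -(mulV a) mulVK. Qed.
Lemma inv_uniq (a b : H) : a ⋆ b = one -> inv a = b.
Proof. by move=> e; rewrite -[inv a]mulr1 -e mulVK. Qed.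
Lemma invM (a b : H) : inv (a ⋆ b) = inv b ⋆ inv a.
Proof. by apply: inv_uniq; rewrite mulA' mulKV mulrV. Qed.
Lemma inv1 : inv one = one.
Proof. by apply: inv_uniq; rewrite mul1. Qed.

Ltac gsimpl := repeat progress rewrite ?invM ?invK ?inv1 ?mulA' ?mul1 ?mulr1 ?mulVK ?mulKV ?mulV ?mulrV.

Definition conjg (g a : H) := g ⋆ (a ⋆ inv g).

Lemma conjgM g a b : conjg g (a ⋆ b) = conjg g a ⋆ conjg g b.
Proof. rewrite /conjg; by gsimpl. Qed.
Lemma conjgV g a : conjg g (inv a) = inv (conjg g a).
Proof. rewrite /conjg; by gsimpl. Qed.
Lemma conjg1 g : conjg g one = one.
Proof. rewrite /conjg; by gsimpl. Qed.
Lemma conjg_one a : conjg one a = a.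
Proof. rewrite /conjg; by gsimpl. Qed.
Lemma conjgC h g a : conjg h (conjg g a) = conjg (h ⋆ g) a.
Proof. rewrite /conjg; by gsimpl. Qed.
Lemma conjg_comm g a b : conjg g (comm a b) = comm (conjg g a) (conjg g b).
Proof. rewrite /conjg /comm; by gsimpl. Qed.

Lemma gpowS a n : gpow a n.+1 = a ⋆ gpow a n. Proof. by []. Qed.
Lemma gpow1 a : gpow a 1 = a. Proof. by rewrite /= mulr1. Qed.
Lemma gpow2 a : gpow a 2 = a ⋆ a. Proof. by rewrite /= mulr1. Qed.
Lemma gpow_one n : gpow one n = one.
Proof. by elim: n => //= n ->; rewrite mul1. Qed.
Lemma gpowD a m n : gpow a (m + n) = gpow a m ⋆ gpow a n.
Proof. elim: m => [|m IH] /=; first by rewrite mul1. by rewrite IH mulA'. Qed.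
Lemma gpowM a m n : gpow a (m * n) = gpow (gpow a m) n.
Proof. elim: n => [|n IH]; first by rewrite muln0. by rewrite mulnS gpowD IH. Qed.
Lemma gpowSr a n : gpow a n.+1 = gpow a n ⋆ a.
Proof. by rewrite -addn1 gpowD gpow1. Qed.
Lemma gpow_conj g a n : conjg g (gpow a n) = gpow (conjg g a) n.
Proof. elim: n => [|n IH] /=; first exact: conjg1. by rewrite conjgM IH. Qed.
Lemma gpow_inv a n : gpow (inv a) n = inv (gpow a n).
Proof.
elim: n => [|n IH]; first by rewrite /= inv1.
by rewrite gpowS IH gpowSr invM.
Qed.

Lemma sub_gpow K a n : is_subgroup K -> K a -> K (gpow a n).
Proof. move=> [K1 [KM KV]] Ka; elim: n => //= n IH; exact: KM. Qed.

Lemma N_conj N g a : is_normal N -> N a -> N (conjg g a).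
Proof. by move=> [_ NC] /NC; apply. Qed.
Lemma N_inv N a : is_normal N -> N a -> N (inv a).
Proof. by move=> [[_ [_ NV]] _]; apply: NV. Qed.
Lemma N_mul N a b : is_normal N -> N a -> N b -> N (a ⋆ b).
Proof. by move=> [[_ [NM _]] _]; apply: NM. Qed.
Lemma N_one N : is_normal N -> N one.
Proof. by move=> [[N1 _] _]. Qed.
Lemma N_comm N u d : is_normal N -> N d -> N (comm u d).
Proof.
move=> hN hd; have -> : comm u d = conjg u d ⋆ inv d by rewrite /comm /conjg; gsimpl.
apply: N_mul => //; [exact: N_conj | exact: N_inv].
Qed.
Lemma N_invE N a : is_normal N -> N (inv a) -> N a.
Proof. by move=> hN /(N_inv hN); rewrite invK. Qed.

Lemma cm_refl N a : is_normal N -> congr_mod N a a.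
Proof. by move=> hN; rewrite /congr_mod mulV; apply: N_one. Qed.
Lemma cm_trans N a b c : is_normal N -> congr_mod N a b -> congr_mod N b c -> congr_mod N a c.
Proof.
rewrite /congr_mod => hN h1 h2.
have -> : inv a ⋆ c = (inv a ⋆ b) ⋆ (inv b ⋆ c) by gsimpl.
exact: N_mul.
Qed.
Lemma cm_mulr N a b c : is_normal N -> congr_mod N a b -> congr_mod N (a ⋆ c) (b ⋆ c).
Proof.
rewrite /congr_mod => hN h.
have -> : inv (a ⋆ c) ⋆ (b ⋆ c) = conjg (inv c) (inv a ⋆ b) by rewrite /conjg; gsimpl.
exact: N_conj.
Qed.
Lemma cm_mulN N c b : is_normal N -> N c -> congr_mod N (c ⋆ b) b.
Proof.
rewrite /congr_mod => hN h.
have -> : inv (c ⋆ b) ⋆ b = conjg (inv b) (inv c) by rewrite /conjg; gsimpl.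
apply: N_conj => //; exact: N_inv.
Qed.
Lemma cm_N N a b : is_normal N -> congr_mod N a b -> N b -> N a.
Proof.
rewrite /congr_mod => hN h hb; apply: N_invE => //.
have -> : inv a = (inv a ⋆ b) ⋆ inv b by gsimpl.
apply: N_mul => //; exact: N_inv.
Qed.

Lemma gen_sub S s : S s -> gen S s.
Proof. by move=> hs K _; apply. Qed.
Lemma gen_subgroup S : is_subgroup (gen S).
Proof.
split; first by move=> K [K1 _].
split; first by move=> a b ha hb K hK hS; have [_ [KM _]] := hK; apply: KM; [apply: ha | apply: hb].
by move=> a ha K hK hS; have [_ [_ KV]] := hK; apply: KV; apply: ha.
Qed.
Lemma gen_min S K : is_subgroup K -> (forall s, S s -> K s) -> forall g, gen S g -> K g.
Proof. by move=> hK hS g; apply. Qed.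
Lemma gen_mono S T g : (forall s, S s -> gen T s) -> gen S g -> gen T g.
Proof. move=> h; apply: gen_min => //; exact: gen_subgroup. Qed.
Lemma gen_mul S a b : gen S a -> gen S b -> gen S (a ⋆ b).
Proof. by case: (gen_subgroup S) => _ [M _]; apply: M. Qed.
Lemma gen_inv S a : gen S a -> gen S (inv a).
Proof. by case: (gen_subgroup S) => _ [_ V]; apply: V. Qed.
Lemma gen_normal S : (forall s g, S s -> S (conjg g s)) -> is_normal (gen S).
Proof.
move=> hS; split; first exact: gen_subgroup.
move=> a g; apply: gen_min (fun a => gen S (conjg g a)) _ _ a.
- split; first by rewrite conjg1; case: (gen_subgroup S).
  split; first by move=> x y hx hy; rewrite conjgM; apply: gen_mul.
  by move=> x hx; rewrite conjgV; apply: gen_inv.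
- by move=> s hs; apply: gen_sub; apply: hS.
Qed.

Lemma comm_mul u a b : comm u (a ⋆ b) = comm u a ⋆ conjg a (comm u b).
Proof. rewrite /comm /conjg; by gsimpl. Qed.
Lemma comm_inv u a : comm u (inv a) = conjg (inv a) (inv (comm u a)).
Proof. rewrite /comm /conjg; by gsimpl. Qed.
Lemma comm_one u : comm u one = one.
Proof. rewrite /comm; by gsimpl. Qed.
Lemma inv_comm a b : inv (comm a b) = comm b a.
Proof. rewrite /comm; by gsimpl. Qed.

Lemma FG S K : is_normal K -> (forall u s, S s -> K (comm u s)) ->
  forall u d, gen S d -> K (comm u d).
Proof.
move=> hK hS u d hd; move: d hd u.
apply: gen_min (fun d => forall u, K (comm u d)) _ _.
- split; first by move=> u; rewrite comm_one; apply: N_one.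
  split; first by move=> a b ha hb u; rewrite comm_mul; apply: N_mul => //; apply: N_conj.
  by move=> a ha u; rewrite comm_inv; apply: N_conj => //; apply: N_inv.
- by move=> s hs u; apply: hS.
Qed.

Lemma pow_dvd N d (a b : nat) : is_normal N -> N (gpow d a) -> a %| b -> N (gpow d b).
Proof.
move=> hN h /dvdnP [c ->]; rewrite mulnC gpowM.
by apply: sub_gpow => //; case: hN.
Qed.

Definition Filt (D : nat -> H -> Prop) :=
  (forall r, is_normal (D r)) /\ (forall r u d, D r d -> D r.+1 (comm u d)).
Definition Xc e (N : H -> Prop) (D : nat -> H -> Prop) :=
  forall r d, 2 <= r -> D r d -> N (gpow d (2 ^ (e.+1 - r))).
Definition GS e := forall N D, is_normal N -> Filt D -> Xc e N D ->
  forall w z, D 1 w -> congr_mod N (gpow (w ⋆ z) (2 ^ e)) (gpow w (2 ^ e) ⋆ gpow z (2 ^ e)).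

Lemma closure_pow (N K S : H -> Prop) q : is_normal N -> is_subgroup K ->
  (forall s, S s -> K s /\ N (gpow s q)) ->
  (forall a b, K a -> K b -> N (gpow a q) -> N (gpow b q) -> N (gpow (a ⋆ b) q)) ->
  forall d, gen S d -> N (gpow d q).
Proof.
move=> hN [K1 [KM KV]] hS hM d hd.
suff: K d /\ N (gpow d q) by case.
move: d hd; apply: gen_min => //; split.
- split => //; rewrite gpow_one; exact: N_one.
split.
- by move=> a b [ka na] [kb nb]; split; [apply: KM | apply: hM].
- by move=> a [ka na]; split; [apply: KV | rewrite gpow_inv; apply: N_inv].
Qed.

Lemma Filt_shift D (c : nat) : Filt D -> Filt (fun j => D (j + c)).
Proof. by move=> [hn hF]; split => // r u d hd; rewrite addSn; apply: hF. Qed.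

Lemma boot e : (forall e', e' < e -> GS e') -> forall N D, is_normal N -> Filt D ->
  (forall r d, 2 <= r -> D r d -> gen (fun g => D r g /\ N (gpow g (2 ^ (e.+1 - r)))) d) ->
  Xc e N D.
Proof.
move=> IH N D hN hF hgen.
suff key : forall p r d, 2 <= r -> e.+1 - r = p -> D r d -> N (gpow d (2 ^ (e.+1 - r))).
  by move=> r d hr hd; exact: key _ r d hr erefl hd.
elim/ltn_ind => p IHp r d hr hp hd.
apply: (closure_pow (K := D r)) (hgen r d hr hd) => //.
- by case: (hF.1 r).
move=> a b ha hb na nb.
case: p IHp hp => [|p'] IHp hp.
  by move: na nb; rewrite hp /= !mulr1; apply: N_mul.
apply: (cm_N hN (b := gpow a (2 ^ (e.+1 - r)) ⋆ gpow b (2 ^ (e.+1 - r)))); last exact: N_mul.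
have hlt : p'.+1 < e by lia.
have E1 : 1 + r.-1 = r by lia.
rewrite hp; apply: (IH _ hlt N (fun j => D (j + r.-1))) => //.
- exact: Filt_shift.
- move=> j x hj hx.
  have -> : p'.+2 - j = e.+1 - (j + r.-1) by lia.
  apply: (IHp (e.+1 - (j + r.-1))) => //; lia.
- by rewrite E1.
Qed.

Lemma GS0 : GS 0.
Proof. move=> N D hN _ _ w z _; rewrite expn0 !gpow1; exact: cm_refl. Qed.

Lemma GS_step e : (forall e', e' <= e -> GS e') -> GS e.+1.
Proof.
move=> IH N D hN hF hX w z hw.
pose G r g := (exists d, D r d /\ g = d ⋆ d) \/ D r.+1 g.
pose D' r := gen (G r).
have hD'n : forall r, is_normal (D' r).
  move=> r; apply: gen_normal => s g [[d [hd ->]]|hs].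
  - by left; exists (conjg g d); split; [apply: N_conj => //; exact: hF.1 | rewrite conjgM].
  - by right; apply: N_conj => //; exact: hF.1.
have hF' : Filt D'.
  split => // r u d; apply: FG => // {}u s [[d0 [hd0 ->]]|hs].
  - set c := comm u d0.
    have -> : comm u (d0 ⋆ d0) = (c ⋆ c) ⋆ comm (inv c) d0 by rewrite /c /comm; gsimpl.
    have hc : D r.+1 c by apply: hF.2.
    apply: gen_mul; apply: gen_sub; first by left; exists c.
    right; rewrite -inv_comm; apply: N_inv; first exact: hF.1.
    apply: hF.2; apply: N_inv => //; exact: hF.1.
  - by apply: gen_sub; right; apply: hF.2.
have hX' : Xc e N D'.
  apply: boot => //; first by move=> e' h; apply: IH; exact: ltnW.
  move=> r d hr; apply: gen_mono => s hs; apply: gen_sub; split; first exact: gen_sub.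
  case: hs => [[d0 [hd0 ->]]|hs].
  - rewrite -gpow2 -gpowM; apply: pow_dvd (hX r d0 hr hd0) _ => //.
    rewrite -expnS; apply: dvdn_exp2l; lia.
  - by move: (hX r.+1 s (leqW hr) hs); rewrite subSS.
set n := 2 ^ e.
have hw2 : D 2 (comm z w) by apply: hF.2.
set c := conjg w (comm z w).
have hc : D 2 c by apply: N_conj => //; exact: hF.1.
have hcN : N (gpow c n) by move: (hX 2 c (leqnn 2) hc); rewrite subSS subSS subn0.
set a := c ⋆ (w ⋆ w).
have hc' : D' 1 c by apply: gen_sub; right.
have ha : D' 1 a by apply: gen_mul => //; apply: gen_sub; left; exists w.
have E1 : gpow (w ⋆ z) (2 ^ e.+1) = gpow (a ⋆ (z ⋆ z)) n.
  rewrite expnS gpowM gpow2; congr gpow; rewrite /a /c /conjg /comm; by gsimpl.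
have E2 : forall x, gpow x (2 ^ e.+1) = gpow (x ⋆ x) n.
  by move=> x; rewrite expnS gpowM gpow2.
rewrite E1 !E2.
have s1 := IH e (leqnn e) N D' hN hF' hX' a (z ⋆ z) ha.
have s2 := IH e (leqnn e) N D' hN hF' hX' c (w ⋆ w) hc'.
apply: (cm_trans hN s1).
apply: (cm_trans hN (cm_mulr _ hN s2)).
rewrite mulA'; exact: cm_mulN.
Qed.

Lemma GS_all e : GS e.
Proof.
elim/ltn_ind: e => [[|e]] IH; first exact: GS0.
by apply: GS_step => e' h; apply: IH.
Qed.

End G.

Section App.
Context {H : Grp}.
Local Notation "a ⋆ b" := (gmul H a b) (at level 40, left associativity).
Local Notation inv := (ginv H).
Local Notation one := (gone H).
Implicit Types (a b c d g h u w z x s : H) (K N S T : H -> Prop).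

Ltac gsimpl := repeat progress rewrite ?invM ?invK ?inv1 ?mulA' ?mul1 ?mulr1 ?mulVK ?mulKV ?mulV ?mulrV.

Lemma icomm_cons u (l : seq H) : l <> [::] -> icomm (u :: l) = comm u (icomm l).
Proof. by case: l. Qed.

Lemma icomm_conj g (l : seq H) : conjg g (icomm l) = icomm (map (conjg g) l).
Proof.
elim: l => [|x l IH]; first exact: conjg1.
case: l IH => [|x2 l] IH; first by [].
by rewrite icomm_cons // conjg_comm IH.
Qed.

Lemma map_conjgC h g (l : seq H) : map (conjg h) (map (conjg g) l) = map (conjg (h ⋆ g)) l.
Proof. by rewrite -map_comp; apply: eq_map => a /=; rewrite conjgC. Qed.

Lemma map_conjg1 (l : seq H) : map (conjg one) l = l.
Proof. by rewrite (eq_map conjg_one) map_id. Qed.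

Variables (A : H -> Prop) (hA : (forall a, ~ A a) \/ is_normal A).

Lemma A_conj a g : A a -> A (conjg g a).
Proof. case: hA => [h /h //| hn]; exact: N_conj. Qed.

Lemma has_k_conj g (l : seq H) k : has_k_in A l k -> has_k_in A (map (conjg g) l) k.
Proof.
case=> js [hs [hso hj]]; exists js; split; first exact: hs.
split; first exact: hso.
move=> j hjs; have [hj1 hA1] := hj j hjs.
rewrite size_map; split => //.
rewrite (nth_map one); last by case/andP: hj1 => h1 h2; lia.
exact: A_conj.
Qed.

Lemma E_normal l m : is_normal (E A l m).
Proof.
apply: gen_normal => s g [xs0 [k0 /= [hl hk hkin ->]]].
exists (map (conjg g) xs0), k0 => /=; rewrite size_map; split => //.
- exact: has_k_conj.
- by rewrite gpow_conj icomm_conj.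
Qed.

Lemma has_k_shift (us l : seq H) k : has_k_in A l k -> has_k_in A (us ++ l) k.
Proof.
case=> js [hs [hso hj]]; exists (map (addn (size us)) js); split; first by rewrite size_map.
split.
  by rewrite sorted_map; apply: sub_sorted hso => a b /=; rewrite ltn_add2l.
move=> j' /mapP [j hjs ->]; have [hj1 hA1] := hj j hjs.
rewrite size_cat; split; first lia.
have h1 : ~~ ((size us + j).-1 < size us) by lia.
have h2 : (size us + j).-1 - size us = j.-1 by lia.
by rewrite nth_cat (negbTE h1) h2.
Qed.

Lemma mainL (m i : nat) (y : H) (xs : seq H) (k : nat) :
  (1 <= i <= m)%N -> size xs = i -> (k <= m - i)%N -> has_k_in A xs k ->
  congr_mod (E A i.+1 m.+1)
    (comm (gpow (icomm xs) (2 ^ (m - i - k))) y)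
    (gpow (comm (icomm xs) y) (2 ^ (m - i - k))).
Proof.
move=> him hsz hk hkin.
set e := m - i - k.
set N := E A i.+1 m.+1.
have hN : is_normal N := E_normal _ _.
have xsne : forall g, map (conjg g) xs <> [::].
  move=> g; have : size (map (conjg g) xs) != 0 by rewrite size_map hsz; lia.
  by case: (map _ _).
pose Sr r s := exists us g, size us = r /\ s = icomm (us ++ map (conjg g) xs).
pose D r := gen (Sr r).
have hDn : forall r, is_normal (D r).
  move=> r; apply: gen_normal => s h [us [g [hus ->]]].
  exists (map (conjg h) us), (h ⋆ g); rewrite size_map icomm_conj map_cat map_conjgC.
  by split.
have hF : Filt D.
  split => // r u d hd; apply: (FG (S := Sr r) (K := D r.+1)) hd => //.
  move=> u0 s [us [g [hus ->]]]; apply: gen_sub; exists (u0 :: us), g.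
  split; first by rewrite /= hus.
  rewrite cat_cons icomm_cons //.
  by case: (us) => [|? ?] //=; exact: xsne.
have good : forall us g, 1 <= size us ->
    N (gpow (icomm (us ++ map (conjg g) xs)) (2 ^ (e.+1 - size us))).
  elim=> [|u us IH] g hsz1 //.
  case: (leqP (size (u :: us)) e.+1) => hle.
  - apply: gen_sub; exists ((u :: us) ++ map (conjg g) xs), k; cbv zeta.
    have hL : size ((u :: us) ++ map (conjg g) xs) = size (u :: us) + i
      by rewrite size_cat size_map hsz.
    rewrite hL; split.
    + rewrite /e in hle; lia.
    + rewrite /e in hle; lia.
    + apply: has_k_shift; exact: has_k_conj.
    + congr (gpow _ (2 ^ _)); rewrite /e in hle *; lia.
  - have h0 : e.+1 - size (u :: us) = 0 by lia.
    rewrite h0 expn0 gpow1 cat_cons icomm_cons; last first.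
      by case: (us) => [|? ?] //=; exact: xsne.
    apply: (N_comm (N := N)) => //.
    have h1 : 1 <= size us by move: hle => /=; lia.
    move: (IH g h1); have -> : e.+1 - size us = 0 by move: hle => /=; lia.
    by rewrite expn0 gpow1.
have hX : Xc e N D.
  apply: boot => //; first by move=> e' _; exact: GS_all.
  move=> r d hr; apply: gen_mono => s [us [g [hus ->]]]; apply: gen_sub; split.
  - by apply: gen_sub; exists us, g.
  - rewrite -hus; apply: good; lia.
have xsne1 : xs <> [::] by move: (xsne one); rewrite map_conjg1.
set x := icomm xs.
set t := comm y x.
have ht : D 1 t.
  apply: gen_sub; exists [:: y], one; split => //.
  by rewrite map_conjg1 cat1s icomm_cons.
have key : congr_mod N (gpow (t ⋆ x) (2 ^ e)) (gpow t (2 ^ e) ⋆ gpow x (2 ^ e)).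
  exact: (GS_all (e := e) hN hF hX).
set n := 2 ^ e in key *.
have Etx : t ⋆ x = conjg y x by rewrite /t /comm /conjg; gsimpl.
rewrite Etx -gpow_conj in key.
have -> : comm x y = inv t by rewrite /t inv_comm.
rewrite /congr_mod gpow_inv.
set X := gpow x n in key *; set T := gpow t n in key *.
have -> : inv (comm X y) ⋆ inv T = conjg (conjg y X) (inv (inv (conjg y X) ⋆ (T ⋆ X))).
  by rewrite /conjg /comm; gsimpl.
apply: (N_conj (N := N)) => //; exact: (N_inv (N := N)).
Qed.
End App.

Theorem lemma5p7 (H : Grp) (A : H -> Prop)
  (hA : (forall a, ~ A a) \/ is_normal A)
  (m i : nat) (y : H) (xs : seq H) (k : nat) :
  (1 <= m)%N -> (1 <= i <= m)%N -> size xs = i -> (k <= m - i)%N ->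
  has_k_in A xs k ->
  congr_mod (E A i.+1 m.+1)
    (comm (gpow (icomm xs) (2 ^ (m - i - k))) y)
    (gpow (comm (icomm xs) y) (2 ^ (m - i - k)))
  /\
  congr_mod (@Etilde H i.+1 m.+1)
    (comm (gpow (icomm xs) (2 ^ (m - i))) y)
    (gpow (comm (icomm xs) y) (2 ^ (m - i))).
Proof.
move=> _ him hsz hk hkin; split; first exact: mainL.
rewrite /Etilde -[m - i]subn0.
apply: (mainL (A := fun _ => False) (or_introl (fun _ h => h))) => //.
by exists [::]; split => //; split.
Qed.
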